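(* Let $K$ be a non-archimedean local field ($p$-field), and let $n>0$ be an integer. If $s_1,\dots,s_t\in V$ satisfy $\mathrm{mod}_K\big(d(s_1\cdots s_i)\big)\in[q^{-n},q^n]$ for every $i\in\{1,\dots,t\}$, then $s_1\cdots s_t\in\Omega_n$.
   Context: $\mathrm{mod}_K$ is the module of $K$ (the factor by which multiplication scales a Haar measure of $K$), $q$ the cardinality of the residue field, $\pi$ a uniformizer (so $\mathrm{mod}_K(\pi)=q^{-1}$), $R=\{x\in K:\mathrm{mod}_K(x)\le 1\}$ the ring of integers and $R^*=\{x\in K:\mathrm{mod}_K(x)=1\}$ its group of units. $\mathrm{sol}(K)$ is the group of matrices $\begin{pmatrix} a&0&x\\0&a^{-1}&y\\0&0&1\end{pmatrix}$ with $a\in K^*$, $x,y\in K$, and $d:\mathrm{sol}(K)\to K^*$ sends such a matrix to $a$. $V=V_1\cup V_1^{-1}$ where $V_1$ is the set of such matrices with $a=\pi^{r}u$, $r\in\{-1,0,1\}$, $u\in R^*$, $x,y\in R$. For $n>0$, $\Omega_n$ is the set of such matrices with $\mathrm{mod}_K(a)\in[q^{-n},q^n]$ and $x,y\in\pi^{-n}R$. *)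

(* Defs.v *)
From HB Require Import structures.
From mathcomp Require Import all_boot all_order all_algebra.
Set Implicit Arguments. Unset Strict Implicit. Unset Printing Implicit Defensive.
Import Order.TTheory GRing.Theory Num.Theory.
Local Open Scope ring_scope.

(* A non-archimedean local field is presented by a field K together with its
   normalized discrete valuation v : K -> int (the value at 0 is irrelevant)
   and the cardinality q of the residue field. *)

Section LocalField.
Variable K : fieldType.
Variable v : K -> int.

(* "x has valuation >= N" (0 has valuation +oo) *)
Definition vge (N : int) (x : K) : Prop := x = 0 \/ (N <= v x)%R.

Definition is_nonarch_local_field (q : nat) : Prop :=
  [/\
      (forall x y, x != 0 -> y != 0 -> v (x * y) = v x + v y),
      (forall x y, x != 0 -> y != 0 -> x + y != 0 ->
                     Num.min (v x) (v y) <= v (x + y)),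
      (* discrete, normalized: a uniformizer exists *)
      (exists pi : K, pi != 0 /\ v pi = 1),
      (* the residue field R / piR is finite with q elements *)
      (exists reps : seq K,
          [/\ size reps = q,
              (forall r, r \in reps -> vge 0 r),
              (forall i j, (i < q)%N -> (j < q)%N -> i <> j ->
                   ~ vge 1 (nth 0 reps i - nth 0 reps j)) &
              (forall x, vge 0 x -> exists2 i, (i < q)%N &
                   vge 1 (x - nth 0 reps i))]) &
      (forall u : nat -> K,
          (forall N : int, exists M, forall m k, (M <= m)%N -> (M <= k)%N ->
               vge N (u m - u k)) ->
          exists l, forall N : int, exists M, forall m, (M <= m)%N ->
               vge N (u m - l))].

Definition modK (q : nat) (x : K) : rat :=
  if x == 0 then 0 else (q%:R : rat) ^ (- v x).

Definition inR (q : nat) (x : K) : Prop := modK q x <= 1.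

Definition solmx (a x y : K) : 'M[K]_3 :=
  \matrix_(i < 3, j < 3)
    (if (i == 0 :> nat) && (j == 0 :> nat) then a
     else if (i == 0 :> nat) && (j == 2 :> nat) then x
     else if (i == 1 :> nat) && (j == 1 :> nat) then a^-1
     else if (i == 1 :> nat) && (j == 2 :> nat) then y
     else if (i == 2 :> nat) && (j == 2 :> nat) then 1
     else 0).

Definition in_sol (s : 'M[K]_3) : Prop :=
  exists a x y, a != 0 /\ s = solmx a x y.

Definition dsol (s : 'M[K]_3) : K := s 0 0.

Definition V1 (q : nat) (pi : K) (s : 'M[K]_3) : Prop :=
  exists (r : int) (u a x y : K),
    [/\ r \in [:: -1; 0; 1], modK q u = 1, a = pi ^ r * u,
        inR q x /\ inR q y & s = solmx a x y].

Definition Vset (q : nat) (pi : K) (s : 'M[K]_3) : Prop :=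
  V1 q pi s \/ (s \in unitmx /\ V1 q pi (invmx s)).

Definition Omega (q : nat) (pi : K) (n : nat) (s : 'M[K]_3) : Prop :=
  exists a x y, [/\ a != 0, s = solmx a x y,
    (q%:R : rat) ^ (- n%:Z) <= modK q a <= (q%:R : rat) ^ n%:Z,
    (exists r, inR q r /\ x = pi ^ (- n%:Z) * r) &
    (exists r, inR q r /\ y = pi ^ (- n%:Z) * r)].

End LocalField.

(* Main.v *)
Require Import Defs.
From HB Require Import structures.
From mathcomp Require Import all_boot all_order all_algebra.
From mathcomp Require Import ring zify.
Import Order.TTheory GRing.Theory Num.Theory.
Local Open Scope ring_scope.

Lemma solmx_mul (K : fieldType) (a x y b x' y' : K) : a != 0 ->
  solmx a x y *m solmx b x' y' = solmx (a * b) (a * x' + x) (a^-1 * y' + y).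
Proof.
move=> a0; apply/matrixP => i j; rewrite !mxE !big_ord_recr big_ord0 /= !mxE /=.
case: i => [[|[|[|i]]] Hi] //; case: j => [[|[|[|j]]] Hj] //=;
  rewrite ?invfM; ring.
Qed.

Lemma solmx1 (K : fieldType) : solmx 1 0 0 = 1%:M :> 'M[K]_3.
Proof.
apply/matrixP => i j; rewrite !mxE /=.
case: i => [[|[|[|i]]] Hi] //; case: j => [[|[|[|j]]] Hj] //=; by rewrite ?invr1.
Qed.

Lemma solmx_inv (K : fieldType) (a x y : K) : a != 0 ->
  invmx (solmx a x y) = solmx a^-1 (- (a^-1 * x)) (- (a * y)).
Proof.
move=> a0.
have h : solmx a x y *m solmx a^-1 (- (a^-1 * x)) (- (a * y)) = 1%:M.
  rewrite solmx_mul // -solmx1; congr solmx.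
  - by rewrite divff.
  - by rewrite mulrN mulrA divff // mul1r addNr.
  - by rewrite mulrN mulrA mulVf // mul1r addNr.
have [u _] := mulmx1_unit h.
by rewrite -[RHS](mulKmx u) h mulmx1.
Qed.
Section Val.
Variable K : fieldType.
Variable v : K -> int.
Hypothesis vmul : forall x y, x != 0 -> y != 0 -> v (x * y) = v x + v y.
Hypothesis vadd : forall x y, x != 0 -> y != 0 -> x + y != 0 ->
                     Num.min (v x) (v y) <= v (x + y).

Lemma v1 : v 1 = 0.
Proof. have := vmul _ _ (oner_neq0 K) (oner_neq0 K); rewrite mulr1 => h. move: (v 1) h => a h. lia. Qed.

Lemma vV x : x != 0 -> v x^-1 = - v x.
Proof.
move=> x0; have := vmul _ _ x0 (invr_neq0 x0); rewrite divff // v1; lia.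
Qed.

Lemma vN x : x != 0 -> v (- x) = v x.
Proof.
move=> x0; have m10 : (-1 : K) != 0 by rewrite oppr_eq0 oner_neq0.
have := vmul _ _ m10 m10; rewrite mulrNN mulr1 v1 => h.
have h1 : v (-1) = 0 by lia.
by rewrite -mulN1r vmul // h1 add0r.
Qed.

Lemma vge_opp N x : vge v N x -> vge v N (- x).
Proof.
case=> [->|h]; first by left; rewrite oppr0.
case: (eqVneq x 0) => [->|x0]; first by left; rewrite oppr0.
by right; rewrite vN.
Qed.

Lemma vge_add N x y : vge v N x -> vge v N y -> vge v N (x + y).
Proof.
case=> [->|hx]; first by rewrite add0r.
case=> [->|hy]; first by rewrite addr0; right.
case: (eqVneq x 0) => [->|x0]; first by rewrite add0r; right.
case: (eqVneq y 0) => [->|y0]; first by rewrite addr0; right.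
case: (eqVneq (x + y) 0) => [->|s0]; first by left.
right; apply: le_trans (vadd _ _ x0 y0 s0).
by rewrite le_min hx hy.
Qed.

Lemma vge_mul N M x y : vge v N x -> vge v M y -> vge v (N + M) (x * y).
Proof.
case=> [->|hx]; first by rewrite mul0r; left.
case=> [->|hy]; first by rewrite mulr0; left.
case: (eqVneq x 0) => [->|x0]; first by rewrite mul0r; left.
case: (eqVneq y 0) => [->|y0]; first by rewrite mulr0; left.
right; rewrite vmul //; exact: lerD.
Qed.

Lemma vge_le N M x : N <= M -> vge v M x -> vge v N x.
Proof. by move=> NM [->|h]; [left|right; apply: le_trans h]. Qed.

Lemma vX pi n : pi != 0 -> v pi = 1 -> v (pi ^+ n) = n%:Z.
Proof.
move=> p0 vp; elim: n => [|n IH]; first by rewrite expr0 v1.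
rewrite exprS vmul ?expf_neq0 // vp IH; lia.
Qed.
End Val.

Lemma q_gt1 (K : fieldType) (v : K -> int) (q : nat) :
  is_nonarch_local_field v q -> (1 < q)%N.
Proof.
case=> vmul vadd _ [reps [Hsz Hr Hdist Hcov]] _.
have [i i0 _] := Hcov 0 (or_introl erefl).
case: q Hsz Hdist Hcov i0 => // [[|//]] Hsz Hdist Hcov _.
have [j j0 h1] : exists2 i, (i < 1)%N & vge v 1 (1 - nth 0 reps i) by apply: Hcov; right; rewrite (@v1 _ _ vmul).
have [k k0 h0] := Hcov 0 (or_introl erefl).
case: j j0 h1 => // _ h1; case: k k0 h0 => // _ h0.
have := @vge_add _ _ vadd _ _ _ h1 (@vge_opp _ _ vmul _ _ h0).
rewrite sub0r opprK subrK => -[]; first by move/eqP; rewrite oner_eq0.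
by rewrite (@v1 _ _ vmul).
Qed.

Theorem lemma3 (K : fieldType) (v : K -> int) (q : nat) (pi : K)
  (HK : is_nonarch_local_field v q) (Hpi0 : pi != 0) (Hpi : v pi = 1)
  (n : nat) (Hn : (0 < n)%N) (t : nat) (s : nat -> 'M[K]_3)
  (HsV : forall j, (1 <= j <= t)%N -> Vset v q pi (s j))
  (Hmod : forall i, (1 <= i <= t)%N ->
     (q%:R : rat) ^ (- n%:Z) <= modK v q (dsol (\prod_(1 <= j < i.+1) s j))
       <= (q%:R : rat) ^ n%:Z) :
  Omega v q pi n (\prod_(1 <= j < t.+1) s j).
Proof.
have q1 := @q_gt1 _ _ _ HK.
have q1r : 1 < (q%:R : rat) by rewrite ltr1n.
case: HK => vmul vadd _ _ _.
have vgeA := @vge_add _ _ vadd.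
have vgeM := @vge_mul _ _ vmul.
have vgeO := @vge_opp _ _ vmul.
have modE x : x != 0 -> modK v q x = (q%:R : rat) ^ (- v x).
  by move=> x0; rewrite /modK (negbTE x0).
have vgeR x : inR v q x -> vge v 0 x.
  rewrite /inR; case: (eqVneq x 0) => [->|x0]; first by left.
  rewrite modE // -(expr0z (q%:R : rat)) ler_eXz2l // => h; right; lia.
have bnd A : A != 0 -> (q%:R : rat) ^ (- n%:Z) <= modK v q A <= (q%:R : rat) ^ n%:Z ->
    - n%:Z <= v A <= n%:Z.
  move=> A0; rewrite modE // !ler_eXz2l // => /andP[h1 h2]; apply/andP; split; lia.
have V1nz (sx : 'M[K]_3) : V1 v q pi sx -> exists a x y,
    [/\ a != 0, sx = solmx a x y, vge v 0 x & vge v 0 y].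
  case=> r [u [a' [x' [y' [_ hu -> [hx hy] ->]]]]].
  exists (pi ^ r * u), x', y'; split => //; try exact: vgeR.
  rewrite mulf_neq0 ?expfz_neq0 //; apply/eqP => u0.
  by move: hu; rewrite /modK u0 eqxx.
have inv k : (k <= t)%N -> exists A X Y, [/\ A != 0,
    \prod_(1 <= j < k.+1) s j = solmx A X Y, - n%:Z <= v A <= n%:Z,
    vge v (- n%:Z) X & vge v (- n%:Z) Y].
  elim: k => [|k IH] kt.
    exists 1, 0, 0; split; rewrite ?big_geq ?oner_neq0 ?solmx1 //; try by left.
    rewrite (@v1 _ _ vmul); apply/andP; split; lia.
  have [A [X [Y [A0 hP hA hX hY]]]] := IH (ltnW kt).
  have Ak1 : (1 <= k.+1 <= t)%N by rewrite kt.
  have hd := Hmod _ Ak1.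
  rewrite big_nat_recr //= hP -mulmxE in hd *.
  have vAge : vge v (- n%:Z) A by right; case/andP: hA.
  have vAVge : vge v (- n%:Z) A^-1 by right; rewrite (@vV _ _ vmul) //; case/andP: hA => _ h; lia.
  case: (HsV _ Ak1) => [hV | [hun hV]].
    have [a [x [y [a0 hi hx hy]]]] := V1nz _ hV.
    rewrite hi in hd *; rewrite solmx_mul //; rewrite solmx_mul // /dsol mxE /= in hd.
    have Aa0 : A * a != 0 by rewrite mulf_neq0.
    exists (A * a), (A * x + X), (A^-1 * y + Y); split => //.
    - exact: bnd.
    - by apply: vgeA => //; rewrite -[X in vge _ X](addr0 (- n%:Z)); apply: vgeM.
    - by apply: vgeA => //; rewrite -[X in vge _ X](addr0 (- n%:Z)); apply: vgeM.
  have [a [x [y [a0 hi hx hy]]]] := V1nz _ hV.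
  have hs : s k.+1 = solmx a^-1 (- (a^-1 * x)) (- (a * y)).
    by rewrite -solmx_inv // -hi invmxK.
  rewrite hs in hd *.
  rewrite solmx_mul //; rewrite solmx_mul // /dsol mxE /= in hd.
  have Aa0 : A * a^-1 != 0 by rewrite mulf_neq0 ?invr_neq0.
  have hB := bnd _ Aa0 hd.
  have vBge : vge v (- n%:Z) (A * a^-1) by right; case/andP: hB.
  have vBVge : vge v (- n%:Z) (A * a^-1)^-1.
    by right; rewrite (@vV _ _ vmul) //; case/andP: hB => _ h; lia.
  exists (A * a^-1), (A * - (a^-1 * x) + X), (A^-1 * - (a * y) + Y); split => //.
  - apply: vgeA => //; rewrite mulrN mulrA; apply: vgeO => //.
    by rewrite -[X in vge _ X](addr0 (- n%:Z)); apply: vgeM.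
  - apply: vgeA => //; rewrite mulrN mulrA; apply: vgeO => //.
    have -> : A^-1 * a = (A * a^-1)^-1 by rewrite invfM invrK mulrC.
    by rewrite -[X in vge _ X](addr0 (- n%:Z)); apply: vgeM.
have [A [X [Y [A0 hP hA hX hY]]]] := inv t (leqnn t).
have pn0 : pi ^+ n != 0 by rewrite expf_neq0.
have piE Z : Z = pi ^ (- n%:Z) * (pi ^+ n * Z) by rewrite -exprnN mulKf.
have inRr Z : vge v (- n%:Z) Z -> inR v q (pi ^+ n * Z).
  rewrite /inR; case: (eqVneq (pi ^+ n * Z) 0) => [->|Z0].
    by rewrite /modK eqxx.
  move=> hZ; rewrite modE // -(expr0z (q%:R : rat)) ler_eXz2l //.
  have Z0' : Z != 0 by apply: contraNneq Z0 => ->; rewrite mulr0.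
  case: hZ => [Ze|hZ]; first by rewrite Ze eqxx in Z0'.
  rewrite vmul // (@vX _ _ vmul) //; lia.
exists A, X, Y; split => //.
- rewrite modE // !ler_eXz2l //; case/andP: hA => h1 h2; apply/andP; split; lia.
- by exists (pi ^+ n * X); split; [apply: inRr | apply: piE].
- by exists (pi ^+ n * Y); split; [apply: inRr | apply: piE].
Qed.
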